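(* Let $t^*>0$ be given and consider the sensor-probing scheme applied to the closed loop, where the closed loop is SG$q$-RO on $[0,t^*]$, satisfies the SG-AS assumption (constant $\Delta_x$, function $\beta_x$) and the output-derivative boundedness assumption, the adversary satisfies the adversary model, and uses the high-gain estimator with $\widehat Y(0)\in\mathcal{Y}(h(x_p(0)))$, whose estimate is held on the non-probing interval $\overline{\mathcal{T}}_0=[t^*,T)$, i.e. $\hat x(t)=\Psi(\widehat Y(t^* ),Y^*(t^* ))$ for $t\in\overline{\mathcal{T}}_0$. Let $K_{\tilde x}>0$ and let $\theta\ge1$ be such that $|\hat x(t^* )-x(t^* )|\le K_{\tilde x}$. Suppose $|x(t^* )|\le\Delta_x$. Then there exists $\overline\sigma_{\tilde x}\in\mathcal{K}_\infty$ such that $$|\hat x(t)-x(t)|\le K_{\tilde x}+\Delta_x+\overline\sigma_{\tilde x}(\Delta_x)\qquad\forall t\in\overline{\mathcal{T}}_0,$$ and for every $\epsilon_{\tilde x}>0$ there exists $T>0$ such that $$|\hat x(T)-x(T)|\le K_{\tilde x}+\Delta_x+\epsilon_{\tilde x}.$$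
   Context: Norm $|\cdot|$ is the infinity norm. Plant $\dot x_p=f_p(x_p,u)$, $y=h(x_p)+a$ ($a$ an attack signal), controller $\dot x_c=f_c(x_c,y)$, $u=\kappa(x_c,y)$; $f_p,f_c,\kappa$ locally Lipschitz, $h$ sufficiently smooth, trajectories exist for all time. $x=(x_p,x_c)\in\mathbb{R}^{n_p+n_c}$, $f(x,y):=(f_p(x_p,\kappa(x_c,y)),f_c(x_c,y))$. SG-AS assumption: there exist $\Delta_x>0$, $\beta_x\in\mathcal{KL}$ with $|x(t)|\le\beta_x(|x(0)|,t)$, $t\ge0$, for solutions of $\dot x=f(x,h(x_p))$ with $|x(0)|\le\Delta_x$. Adversary model: the adversary can alter sensor readings via $a$, knows $f_p,h,f_c,\kappa$, and does not know $u$ or $x(0)$. SG$q$-RO on $[0,t^*]$: for each $\Delta_x\ge0$ there exist $q\in\mathbb{N}_{\ge1}$, a $C^{q+1}$ function $y^*:[0,t^*]\to\mathbb{R}^{n_y}$ and $\Psi:\mathbb{R}^{2(q+1)n_y}\to\mathbb{R}^{n_p+n_c}$ such that for the probed system $\dot x=f(x,y^*(t))$ with $|x(0)|\le\Delta_x$: the solution exists on $[0,t^*]$; $x(t)=\Psi(Y(t),Y^*(t))$ on $[0,t^*]$, with $Y=(h(x_p),\dots,\tfrac{d^q}{dt^q}h(x_p))$ and $Y^*=(y^*,\dots,y^{*(q)})$; and there is $\rho_\Psi\in\mathcal{K}_\infty$ with $|\Psi(\widehat Y,Y^* )-\Psi(Y,Y^* )|\le\rho_\Psi(|\widehat Y-Y|)$.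 Output-derivative boundedness assumption: there are compact sets containing $(\tfrac{d}{dt}h(x_p(t)),\dots,\tfrac{d^q}{dt^q}h(x_p(t)))$ and $\tfrac{d^{q+1}}{dt^{q+1}}h(x_p(t))$ for $t\in[0,t^*]$. Probing scheme: on $\mathcal{T}_0=[0,t^* )$ the adversary sets $y(t)=y^*(t)$ (closed loop $\dot x=f(x,y^*(t))$); on $\overline{\mathcal{T}}_0=[t^*,T)$ it sets $y=h(x_p)$ (closed loop $\dot x=f(x,h(x_p))$). Estimator: on $\mathcal{T}_0$, $\dot{\widehat Y}=\widehat A\widehat Y+\theta\Delta_\theta\widehat H(h(x_p)-\widehat C\widehat Y)$ with $\widehat A$ the block shift matrix (identity blocks on the block superdiagonal), $\widehat C=[\mathbb{I}_{n_y}\ 0]$, $\widehat H=[a_1\mathbb{I}_{n_y},\dots,a_{q+1}\mathbb{I}_{n_y}]^T$ with $s^{q+1}+a_1s^q+\dots+a_{q+1}$ Hurwitz, $\Delta_\theta=\mathrm{diag}(\mathbb{I},\theta\mathbb{I},\dots,\theta^q\mathbb{I})$; on $\overline{\mathcal{T}}_0$, $\dot{\widehat Y}=0$. $\mathcal{Y}(r):=\{\widehat Y:|\widehat Y-r|\le\epsilon_y\}$ for fixed $\epsilon_y>0$. Estimate $\hat x=\Psi(\widehat Y(t),Y^*(t))$ on $\mathcal{T}_0$. *)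

(* Defs.v *)
(* MathComp + MathComp-Analysis (R : realType).  Vectors are row
   vectors 'rV[R]_n; the MathComp-Analysis norm on matrices is the max
   (infinity) norm, as in the paper. *)
From HB Require Import structures.
From mathcomp Require Import all_boot all_order all_algebra.
From mathcomp Require Import all_classical all_reals all_analysis.
From mathcomp Require Import complex.
Unset Printing Implicit Defensive.
Import Order.TTheory GRing.Theory Num.Theory.
Import numFieldNormedType.Exports.
Local Open Scope classical_set_scope.
Local Open Scope ring_scope.

Definition classK {R : realType} (a : R -> R) : Prop :=
  a 0 = 0 /\ {within [set s : R | 0 <= s], continuous a} /\
  (forall s1 s2 : R, 0 <= s1 -> s1 < s2 -> a s1 < a s2).

Definition classKinf {R : realType} (a : R -> R) : Prop :=
  classK a /\ a s @[s --> +oo] --> +oo.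

Definition classKL {R : realType} (b : R -> R -> R) : Prop :=
  (forall t : R, 0 <= t -> classK (fun s => b s t)) /\
  (forall s : R, 0 <= s ->
     (forall t1 t2 : R, 0 <= t1 -> t1 <= t2 -> b s t2 <= b s t1) /\
     b s t @[t --> +oo] --> 0).

Definition loc_lipschitz2 {R : realType} {m n k : nat}
  (g : 'rV[R]_m -> 'rV[R]_n -> 'rV[R]_k) : Prop :=
  forall (z1 : 'rV[R]_m) (z2 : 'rV[R]_n), exists r : R, exists L : R, 0 < r /\
    forall a1 b1 a2 b2, `|a1 - z1| < r -> `|b1 - z1| < r ->
      `|a2 - z2| < r -> `|b2 - z2| < r ->
      `|g a1 a2 - g b1 b2| <= L * Num.max `|a1 - b1| `|a2 - b2|.

Definition Cn {R : realType} {n : nat} (k : nat) (g : R -> 'rV[R]_n) : Prop :=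
  (forall i, (i < k)%N -> forall t : R, derivable ((derive1n i g)) t 1) /\
  continuous ((derive1n k g)).

(* Y(t) = (g(t), g'(t), ..., g^(q)(t)) stacked as the rows of a matrix *)
Definition derivs {R : realType} {n : nat} (q : nat) (g : R -> 'rV[R]_n) (t : R)
  : 'M[R]_(q.+1, n) := \matrix_(i < q.+1, j < n) ((derive1n i g) t) ord0 j.

(* x = (x_p, x_c) is stored as row_mx x_p x_c *)
Definition xp_of {R : realType} {np nc : nat} (x : 'rV[R]_(np + nc)) : 'rV[R]_np :=
  lsubmx x.
Definition xc_of {R : realType} {np nc : nat} (x : 'rV[R]_(np + nc)) : 'rV[R]_nc :=
  rsubmx x.

Definition cl_field {R : realType} {np nc ny nu : nat}
  (fp : 'rV[R]_np -> 'rV[R]_nu -> 'rV[R]_np)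
  (fc : 'rV[R]_nc -> 'rV[R]_ny -> 'rV[R]_nc)
  (kappa : 'rV[R]_nc -> 'rV[R]_ny -> 'rV[R]_nu)
  (x : 'rV[R]_(np + nc)) (y : 'rV[R]_ny) : 'rV[R]_(np + nc) :=
  row_mx (fp (xp_of x) (kappa (xc_of x) y)) (fc (xc_of x) y).

Definition nominal_sol {R : realType} {np nc ny : nat}
  (f : 'rV[R]_(np + nc) -> 'rV[R]_ny -> 'rV[R]_(np + nc))
  (h : 'rV[R]_np -> 'rV[R]_ny) (z : R -> 'rV[R]_(np + nc)) : Prop :=
  {within [set t : R | 0 <= t], continuous z} /\
  (forall t : R, 0 < t -> is_derive t 1 z (f (z t) (h (xp_of (z t))))).

Definition probed_sol {R : realType} {np nc ny : nat}
  (f : 'rV[R]_(np + nc) -> 'rV[R]_ny -> 'rV[R]_(np + nc))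
  (ystar : R -> 'rV[R]_ny) (tstar : R) (z : R -> 'rV[R]_(np + nc)) : Prop :=
  {within `[0, tstar], continuous z} /\
  (forall t : R, 0 < t < tstar -> is_derive t 1 z (f (z t) (ystar t))).

Definition SG_AS {R : realType} {np nc ny : nat}
  (f : 'rV[R]_(np + nc) -> 'rV[R]_ny -> 'rV[R]_(np + nc))
  (h : 'rV[R]_np -> 'rV[R]_ny) (Dx : R) (bx : R -> R -> R) : Prop :=
  0 < Dx /\ classKL bx /\
  forall z : R -> 'rV[R]_(np + nc), nominal_sol f h z -> `|z 0| <= Dx ->
    forall t : R, 0 <= t -> `|z t| <= bx `|z 0| t.

Definition RO_data {R : realType} {np nc ny : nat}
  (f : 'rV[R]_(np + nc) -> 'rV[R]_ny -> 'rV[R]_(np + nc))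
  (h : 'rV[R]_np -> 'rV[R]_ny) (tstar Delta : R) (q : nat)
  (ystar : R -> 'rV[R]_ny)
  (Psi : 'M[R]_(q.+1, ny) -> 'M[R]_(q.+1, ny) -> 'rV[R]_(np + nc)) : Prop :=
  (0 < q)%N /\ Cn q.+1 ystar /\
  (forall x0 : 'rV[R]_(np + nc), `|x0| <= Delta ->
     exists z, probed_sol f ystar tstar z /\ z 0 = x0) /\
  (forall z, probed_sol f ystar tstar z -> `|z 0| <= Delta ->
     forall t : R, 0 < t < tstar ->
       z t = Psi (derivs q (fun s => h (xp_of (z s))) t) (derivs q ystar t)) /\
  (exists rhoPsi : R -> R, classKinf rhoPsi /\
     forall Yh Y Ys : 'M[R]_(q.+1, ny), `|Psi Yh Ys - Psi Y Ys| <= rhoPsi `|Yh - Y|).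

Definition SGq_RO {R : realType} {np nc ny : nat}
  (f : 'rV[R]_(np + nc) -> 'rV[R]_ny -> 'rV[R]_(np + nc))
  (h : 'rV[R]_np -> 'rV[R]_ny) (tstar : R) : Prop :=
  forall Delta : R, 0 <= Delta ->
    exists (q : nat) (ystar : R -> 'rV[R]_ny)
           (Psi : 'M[R]_(q.+1, ny) -> 'M[R]_(q.+1, ny) -> 'rV[R]_(np + nc)),
      RO_data f h tstar Delta q ystar Psi.

Definition out_deriv_bdd {R : realType} {ny : nat} (q : nat)
  (yfun : R -> 'rV[R]_ny) (tstar : R) : Prop :=
  (forall i, (i <= q)%N -> forall t : R, 0 < t < tstar ->
     derivable ((derive1n i yfun)) t 1) /\
  exists (K1 : set 'M[R]_(q, ny)) (K2 : set 'rV[R]_ny),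
    compact K1 /\ compact K2 /\
    forall t : R, 0 < t < tstar ->
      K1 (\matrix_(i < q, j < ny) ((derive1n i.+1 yfun) t) ord0 j) /\
      K2 ((derive1n q.+1 yfun) t).

Definition probing_cl_sol {R : realType} {np nc ny : nat}
  (f : 'rV[R]_(np + nc) -> 'rV[R]_ny -> 'rV[R]_(np + nc))
  (h : 'rV[R]_np -> 'rV[R]_ny) (ystar : R -> 'rV[R]_ny) (tstar : R)
  (x : R -> 'rV[R]_(np + nc)) : Prop :=
  {within [set t : R | 0 <= t], continuous x} /\
  (forall t : R, 0 < t < tstar -> is_derive t 1 x (f (x t) (ystar t))) /\
  (forall t : R, tstar < t -> is_derive t 1 x (f (x t) (h (xp_of (x t))))).

(* s^(q+1) + a_1 s^q + ... + a_(q+1); a i stands for a_(i+1) *)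
Definition hg_poly {R : realType} (q : nat) (a : 'I_q.+1 -> R) : {poly R} :=
  'X^(q.+1) + \sum_(i < q.+1) a i *: 'X^(q - i).

Definition hurwitz {R : realType} (p : {poly R}) : Prop :=
  forall z : R[i], root (map_poly (fun r : R => Complex r 0) p) z -> complex.Re z < 0.

(* A Yh + theta Delta_theta H (y - C Yh), rows of Yh = blocks *)
Definition hg_rhs {R : realType} {ny : nat} (q : nat) (a : 'I_q.+1 -> R)
  (theta : R) (Yh : 'M[R]_(q.+1, ny)) (y : 'rV[R]_ny) : 'M[R]_(q.+1, ny) :=
  \matrix_(i < q.+1, j < ny)
    ((if (i < q)%N then Yh (inord i.+1) j else 0)
     + theta ^+ i.+1 * a i * (y ord0 j - Yh ord0 j)).

Definition estimator_sol {R : realType} {np nc ny : nat} (q : nat)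
  (a : 'I_q.+1 -> R) (theta : R) (h : 'rV[R]_np -> 'rV[R]_ny) (tstar : R)
  (x : R -> 'rV[R]_(np + nc)) (Yh : R -> 'M[R]_(q.+1, ny)) : Prop :=
  {within [set t : R | 0 <= t], continuous Yh} /\
  (forall t : R, 0 < t < tstar ->
     is_derive t 1 Yh (hg_rhs q a theta (Yh t) (h (xp_of (x t))))) /\
  (forall t : R, tstar <= t -> Yh t = Yh tstar).

Definition xhat {R : realType} {np nc ny : nat} (q : nat)
  (Psi : 'M[R]_(q.+1, ny) -> 'M[R]_(q.+1, ny) -> 'rV[R]_(np + nc))
  (Yh : R -> 'M[R]_(q.+1, ny)) (ystar : R -> 'rV[R]_ny) (tstar t : R)
  : 'rV[R]_(np + nc) :=
  if t < tstar then Psi (Yh t) (derivs q ystar t)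
  else Psi (Yh tstar) (derivs q ystar tstar).

(* Main.v *)
Require Import Defs.
From HB Require Import structures.
From mathcomp Require Import all_boot all_order all_algebra.
From mathcomp Require Import all_classical all_reals all_analysis.
Import Order.TTheory GRing.Theory Num.Theory.
Import numFieldNormedType.Exports.
Local Open Scope classical_set_scope.
Local Open Scope ring_scope.



Section H.
Variable R : realType.

Lemma shift_is_derive (V : normedModType R) (f : R -> V) (c s : R) (df : V) :
  is_derive (s + c) 1 f df -> is_derive s 1 (fun u => f (u + c)) df.
Proof.
move=> [Hd Hv].
have E : (fun h : R => h^-1 *: (((fun u => f (u + c)) \o shift s) (h *: 1) - f (s + c)))
   = (fun h : R => h^-1 *: ((f \o shift (s + c)) (h *: 1) - f (s + c))).
  by apply: funext => h /=; rewrite addrA.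
split.
  by rewrite /derivable E.
by rewrite /derive E.
Qed.

Lemma shift_cont (V : normedModType R) (f : R -> V) (c s : R) :
  {for s + c, continuous f} -> {for s, continuous (fun u => f (u + c))}.
Proof.
rewrite continuous_shift (continuous_shift _ s).
have -> : ((fun u => f (u + c)) \o shift s) = (f \o shift (s + c)).
  by apply: funext => h /=; rewrite addrA.
by [].
Qed.

Lemma cont_pos (V : normedModType R) (f : R -> V) :
  {within [set t : R | 0 <= t], continuous f} -> forall t : R, 0 < t -> {for t, continuous f}.
Proof.
move=> Hc t Ht.
have H1 : {within [set t : R | 0 < t], continuous f}.
  by apply: (continuous_subspaceW _ Hc) => u /= /ltW.
move: H1; rewrite continuous_open_subspace; last first.
  exact: open_gt.
by move/(_ t); apply; rewrite inE.
Qed.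

Lemma classK_le (a : R -> R) : classK a -> forall s1 s2, 0 <= s1 -> s1 <= s2 -> a s1 <= a s2.
Proof.
move=> [_ [_ Hm]] s1 s2 H1 H12.
rewrite le_eqVlt in H12; case/orP: H12 => [/eqP -> //|H12].
exact/ltW/Hm.
Qed.

Lemma classK_ge0 (a : R -> R) : classK a -> forall s, 0 <= s -> 0 <= a s.
Proof.
move=> Ha s Hs; have := classK_le _ Ha _ _ (lexx (0:R)) Hs.
by case: Ha => -> _.
Qed.

Lemma sig_Kinf (a : R -> R) : classK a -> classKinf (fun s => a s + s).
Proof.
move=> Ha; have Ha' := Ha; case: Ha' => [H0 [Hc Hm]].
split; first split.
- by rewrite H0 addr0.
- split.
  + apply/subspace_continuousP => s As.
    apply: cvgD.
      by move/subspace_continuousP: Hc; apply.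
    exact: cvg_within.
  + move=> s1 s2 H1 H12; apply: ltrD; first exact: Hm.
    exact: H12.
- apply: (@ger_cvgy _ _ _ _ (fun s => s)); last exact: cvg_id.
  near=> s.
  rewrite lerDr; by apply: (classK_ge0 _ Ha).
Unshelve. all: by end_near.
Qed.
End H.

Theorem lemma2 (R : realType) (np nc ny nu : nat)
  (fp : 'rV[R]_np -> 'rV[R]_nu -> 'rV[R]_np)
  (h : 'rV[R]_np -> 'rV[R]_ny)
  (fc : 'rV[R]_nc -> 'rV[R]_ny -> 'rV[R]_nc)
  (kappa : 'rV[R]_nc -> 'rV[R]_ny -> 'rV[R]_nu)
  (Hfp : loc_lipschitz2 fp) (Hfc : loc_lipschitz2 fc)
  (Hkappa : loc_lipschitz2 kappa)
  (Hh : forall z : 'rV[R]_np, differentiable h z)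
  (tstar : R) (Htstar : 0 < tstar)
  (* SGq-RO on [0, tstar] *)
  (HRO : SGq_RO (cl_field fp fc kappa) h tstar)
  (* SG-AS with constant Dx and function bx *)
  (Dx : R) (bx : R -> R -> R) (HAS : SG_AS (cl_field fp fc kappa) h Dx bx)
  (* probing data used by the adversary (from SGq-RO for the bound Delta0) *)
  (Delta0 : R) (q : nat) (ystar : R -> 'rV[R]_ny)
  (Psi : 'M[R]_(q.+1, ny) -> 'M[R]_(q.+1, ny) -> 'rV[R]_(np + nc))
  (HROd : RO_data (cl_field fp fc kappa) h tstar Delta0 q ystar Psi)
  (* closed-loop trajectory under the probing scheme on [0, +oo) *)
  (x : R -> 'rV[R]_(np + nc))
  (Hx0 : `|x 0| <= Delta0)
  (Hx : probing_cl_sol (cl_field fp fc kappa) h ystar tstar x)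
  (* output-derivative boundedness *)
  (Hbdd : out_deriv_bdd q (fun t => h (xp_of (x t))) tstar)
  (* high-gain estimator *)
  (a : 'I_q.+1 -> R) (Ha : hurwitz (hg_poly q a))
  (theta : R) (Htheta : 1 <= theta)
  (eps_y : R) (Heps_y : 0 < eps_y)
  (Yhat : R -> 'M[R]_(q.+1, ny))
  (HYhat : estimator_sol q a theta h tstar x Yhat)
  (HY0 : `|row ord0 (Yhat 0) - h (xp_of (x 0))| <= eps_y)
  (* error bound at tstar *)
  (Kx : R) (HKx : 0 < Kx)
  (Herr : `|xhat q Psi Yhat ystar tstar tstar - x tstar| <= Kx)
  (Hxt : `|x tstar| <= Dx) :
  (exists sig : R -> R, classKinf sig /\
     forall t : R, tstar <= t ->
       `|xhat q Psi Yhat ystar tstar t - x t| <= Kx + Dx + sig Dx) /\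
  (forall eps : R, 0 < eps -> exists T : R, 0 < T /\ tstar <= T /\
       `|xhat q Psi Yhat ystar tstar T - x T| <= Kx + Dx + eps).
Proof.
case: HAS => HDx [HKL Hsol].
case: Hx => Hxc [_ Hxd].
pose z := fun u => x (u + tstar).
have Hz : nominal_sol (cl_field fp fc kappa) h z.
  split.
  - apply: continuous_in_subspaceT => s; rewrite inE /= => Hs.
    apply: shift_cont; apply: (@cont_pos _ _ _ Hxc).
    by apply: ltr_wpDl.
  - move=> t Ht; apply: shift_is_derive; apply: Hxd.
    by rewrite ltrDr.
have Hz0 : `|z 0| <= Dx by rewrite /z add0r.
have Hb : forall t, tstar <= t -> `|x t| <= bx `|x tstar| (t - tstar).
  move=> t Ht; have := Hsol z Hz Hz0 (t - tstar).
  by rewrite /z subrK add0r subr_ge0; apply.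
have HK0 : classK (fun s => bx s 0) by exact: (HKL.1 0 (lexx 0)).
have Htri : forall t, tstar <= t ->
    `|xhat q Psi Yhat ystar tstar t - x t| <= Kx + Dx + `|x t|.
  move=> t Ht.
  have -> : xhat q Psi Yhat ystar tstar t = xhat q Psi Yhat ystar tstar tstar.
    by rewrite /xhat ltNge Ht ltxx.
  set A := xhat _ _ _ _ _ _.
  have -> : A - x t = (A - x tstar) + (x tstar - x t).
    by rewrite addrA subrK.
  apply: (le_trans (ler_normD _ _)); rewrite -addrA; apply: lerD => //.
  apply: (le_trans (ler_normB _ _)); exact: lerD.
split.
  exists (fun s => bx s 0 + s); split; first exact: sig_Kinf.
  move=> t Ht; apply: (le_trans (Htri t Ht)); rewrite lerD2l.
  apply: (le_trans (Hb t Ht)).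
  apply: (@le_trans _ _ (bx `|x tstar| 0)).
    apply: ((HKL.2 `|x tstar| (normr_ge0 _)).1 0 (t - tstar) (lexx 0)).
    by rewrite subr_ge0.
  apply: (@le_trans _ _ (bx Dx 0)).
    by have := classK_le _ _ HK0 _ _ (normr_ge0 _) Hxt.
  by rewrite lerDl ltW.
move=> eps He.
have Hc := (HKL.2 Dx (ltW HDx)).2.
have [M [_ HM]] := cvgr_lt 0 Hc eps He.
pose t0 := `|M| + 1.
have Ht0 : 0 < t0 by rewrite /t0 ltr_wpDl.
have HMt0 : M < t0 by rewrite /t0 (le_lt_trans (ler_norm M)) // ltrDl ltr01.
exists (t0 + tstar); split; first by rewrite addr_gt0.
split; first by rewrite lerDr ltW.
apply: (le_trans (Htri _ _)); first by rewrite lerDr ltW.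
rewrite lerD2l.
apply: (le_trans (Hb _ _)); first by rewrite lerDr ltW.
rewrite addrK.
apply: (le_trans _ (ltW (HM t0 HMt0))).
by have := classK_le _ _ (HKL.1 t0 (ltW Ht0)) _ _ (normr_ge0 _) Hxt.
Qed.
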